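(* Fix $\nu>1$, let $F_{\text{exist}}=\nu(\nu+1)$, $F_{\text{2d}}=\nu(\nu+1)/\sqrt{\nu^2+\nu-1}$, and $2<F<F_{\text{2d}}$. For $\theta\in[0,2\pi]$, $\mu\in\mathbb{R}$ define $$\ell_1(\theta,\mu)=\tfrac{\cos\theta F_{\text{exist}}+F}{FF_{\text{exist}}}\mu-\tfrac12\cos^2\theta-\tfrac F2\cos\theta-\tfrac12,\quad \ell_2(\theta,\mu)=-\tfrac{\cos\theta F_{\text{exist}}+F}{FF_{\text{exist}}}\mu-\tfrac12\cos^2\theta+\tfrac F2\cos\theta-\tfrac12,$$ $$\ell_3(\theta,\mu)=\tfrac{\mu}{F_{\text{exist}}}-\sin^2\theta-1,$$ and let $I$ be the open interval with endpoints $\frac{F^2}{2}-\frac{F^2}{F_{\text{exist}}}\mp\frac{F}{F_{\text{2d}}}\sqrt{F_{\text{2d}}^2-F^2}$. Then the midpoint $\mu_{L,opt}=\frac{F^2}{2}-\frac{F^2}{F_{\text{exist}}}$ of $I$ minimizes over $\mu\in I$ the quantity $\max_{\theta\in[0,2\pi]}\max\{\ell_1(\theta,\mu),\ell_2(\theta,\mu)\}$, and for all $\theta\in[0,2\pi]$, $$\ell_1(\theta,\mu_{L,opt}),\ \ell_2(\theta,\mu_{L,opt})\le\frac{F^2-F_{\text{2d}}^2}{2F_{\text{2d}}^2}<0,\qquad \ell_3(\theta,\mu_{L,opt})\le\frac{F_{\text{exist}}-2}{2F_{\text{exist}}^2}F^2-1<0.$$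
   Context: The functions $\ell_j(\theta,\mu)$ are the leading-order real parts of the three $\mu$-weighted dispersion relations at the upstream endstate of a hydraulic shock of the inviscid Saint-Venant equations in the limit $(k,\eta)=r(\cos\theta,\sin\theta)$, $r\to\infty$. *)

(* Defs.v *)
From Stdlib Require Import Reals Lra.
Open Scope R_scope.

Definition F_exist (nu : R) : R := nu * (nu + 1).
Definition F_2d (nu : R) : R := nu * (nu + 1) / sqrt (nu ^ 2 + nu - 1).

Definition ell1 (nu F theta mu : R) : R :=
  (cos theta * F_exist nu + F) / (F * F_exist nu) * mu
  - / 2 * (cos theta) ^ 2 - F / 2 * cos theta - / 2.
Definition ell2 (nu F theta mu : R) : R :=
  - ((cos theta * F_exist nu + F) / (F * F_exist nu)) * mu
  - / 2 * (cos theta) ^ 2 + F / 2 * cos theta - / 2.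
Definition ell3 (nu F theta mu : R) : R :=
  mu / F_exist nu - (sin theta) ^ 2 - 1.

Definition ell12 (nu F theta mu : R) : R := Rmax (ell1 nu F theta mu) (ell2 nu F theta mu).

Definition I_lo (nu F : R) : R :=
  F ^ 2 / 2 - F ^ 2 / F_exist nu - F / F_2d nu * sqrt (F_2d nu ^ 2 - F ^ 2).
Definition I_hi (nu F : R) : R :=
  F ^ 2 / 2 - F ^ 2 / F_exist nu + F / F_2d nu * sqrt (F_2d nu ^ 2 - F ^ 2).

Definition mu_L_opt (nu F : R) : R := F ^ 2 / 2 - F ^ 2 / F_exist nu.

(* Main.v *)
Require Import Defs.
From Stdlib Require Import Reals Lra.
Open Scope R_scope.

Theorem mainTheorem6 (nu F : R) :
  1 < nu -> 2 < F -> F < F_2d nu ->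
  (* mu_L_opt is the midpoint of I and lies in I *)
  mu_L_opt nu F = (I_lo nu F + I_hi nu F) / 2 /\
  I_lo nu F < mu_L_opt nu F < I_hi nu F /\
  (* mu_L_opt minimizes mu |-> max_theta max(ell1, ell2) over I *)
  (forall mu, I_lo nu F < mu < I_hi nu F ->
     forall theta, 0 <= theta <= 2 * PI ->
       exists theta', 0 <= theta' <= 2 * PI /\
         ell12 nu F theta (mu_L_opt nu F) <= ell12 nu F theta' mu) /\
  (* bounds *)
  (forall theta, 0 <= theta <= 2 * PI ->
     ell1 nu F theta (mu_L_opt nu F) <= (F ^ 2 - F_2d nu ^ 2) / (2 * F_2d nu ^ 2) /\
     ell2 nu F theta (mu_L_opt nu F) <= (F ^ 2 - F_2d nu ^ 2) / (2 * F_2d nu ^ 2) /\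
     ell3 nu F theta (mu_L_opt nu F)
       <= (F_exist nu - 2) / (2 * F_exist nu ^ 2) * F ^ 2 - 1) /\
  (F ^ 2 - F_2d nu ^ 2) / (2 * F_2d nu ^ 2) < 0 /\
  (F_exist nu - 2) / (2 * F_exist nu ^ 2) * F ^ 2 - 1 < 0.
Proof.
  intros Hnu HF HFD.
  set (E := F_exist nu).
  assert (HE : E > 2) by (unfold E, F_exist; nra).
  set (s := sqrt (nu ^ 2 + nu - 1)).
  assert (Hs2 : s * s = E - 1).
  { unfold s, E, F_exist. rewrite sqrt_sqrt; nra. }
  assert (Hs : 0 < s) by (unfold s; apply sqrt_lt_R0; nra).
  assert (HD : F_2d nu = E / s) by reflexivity.
  assert (HD2 : F_2d nu ^ 2 = E ^ 2 / (E - 1)).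
  { rewrite HD, <- Hs2. field. lra. }
  assert (HDpos : 0 < F_2d nu) by (rewrite HD; apply Rdiv_lt_0_compat; lra).
  assert (HFD2 : F ^ 2 < F_2d nu ^ 2) by nra.
  assert (HFE2 : F ^ 2 * (E - 1) < E ^ 2).
  { rewrite HD2 in HFD2. apply (Rmult_lt_compat_r (E - 1)) in HFD2; [|lra].
    unfold Rdiv in HFD2. rewrite Rmult_assoc, Rinv_l in HFD2; lra. }
  assert (Hbnd : (F ^ 2 - F_2d nu ^ 2) / (2 * F_2d nu ^ 2)
                 = F ^ 2 * (E - 1) / (2 * E ^ 2) - / 2).
  { rewrite HD2. field. lra. }
  assert (Hbneg : F ^ 2 * (E - 1) / (2 * E ^ 2) - / 2 < 0).
  { assert (F ^ 2 * (E - 1) / (2 * E ^ 2) < / 2); [|lra].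
    apply (Rmult_lt_reg_r (2 * E ^ 2)); [nra|].
    unfold Rdiv. rewrite Rmult_assoc, Rinv_l; nra. }
  assert (Hmu : mu_L_opt nu F = F ^ 2 * (E - 2) / (2 * E)).
  { unfold mu_L_opt. fold E. field. lra. }
  assert (Hsq : 0 < sqrt (F_2d nu ^ 2 - F ^ 2)) by (apply sqrt_lt_R0; lra).
  assert (Hterm : 0 < F / F_2d nu * sqrt (F_2d nu ^ 2 - F ^ 2)).
  { apply Rmult_lt_0_compat; [apply Rdiv_lt_0_compat|]; lra. }
  assert (H1 : forall theta, ell1 nu F theta (mu_L_opt nu F)
     = - (cos theta + F / E) ^ 2 / 2 + F ^ 2 * (E - 1) / (2 * E ^ 2) - / 2).
  { intro t. rewrite Hmu. unfold ell1. fold E. field. lra. }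
  assert (H2 : forall theta, ell2 nu F theta (mu_L_opt nu F)
     = - (cos theta - F / E) ^ 2 / 2 + F ^ 2 * (3 - E) / (2 * E ^ 2) - / 2).
  { intro t. rewrite Hmu. unfold ell2. fold E. field. lra. }
  assert (Hcmp : F ^ 2 * (3 - E) / (2 * E ^ 2) <= F ^ 2 * (E - 1) / (2 * E ^ 2)).
  { unfold Rdiv. apply Rmult_le_compat_r.
    - left; apply Rinv_0_lt_compat; nra.
    - nra. }
  assert (B1 : forall theta, ell1 nu F theta (mu_L_opt nu F)
                <= (F ^ 2 - F_2d nu ^ 2) / (2 * F_2d nu ^ 2)).
  { intro t. rewrite H1, Hbnd. pose proof (pow2_ge_0 (cos t + F / E)). lra. }
  assert (B2 : forall theta, ell2 nu F theta (mu_L_opt nu F)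
                <= (F ^ 2 - F_2d nu ^ 2) / (2 * F_2d nu ^ 2)).
  { intro t. rewrite H2, Hbnd. pose proof (pow2_ge_0 (cos t - F / E)). lra. }
  assert (H3b : (E - 2) / (2 * E ^ 2) * F ^ 2 - 1 < 0).
  { assert ((E - 2) / (2 * E ^ 2) * F ^ 2 < 1); [|lra].
    apply (Rmult_lt_reg_r (2 * E ^ 2)); [nra|].
    replace ((E - 2) / (2 * E ^ 2) * F ^ 2 * (2 * E ^ 2)) with ((E - 2) * F ^ 2)
      by (field; lra).
    nra. }
  split; [unfold I_lo, I_hi, mu_L_opt; fold E; field; lra|].
  split; [unfold I_lo, I_hi, mu_L_opt; fold E; split; lra|].
  split.
  { intros mu _ theta _.
    assert (Hr : -1 <= - (F / E) <= 1).
    { assert (0 < F / E) by (apply Rdiv_lt_0_compat; lra).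
      assert (F / E < 1); [|lra].
      apply (Rmult_lt_reg_r E); [lra|]. unfold Rdiv.
      rewrite Rmult_assoc, Rinv_l by lra. nra. }
    exists (acos (- (F / E))).
    pose proof (acos_bound (- (F / E))). pose proof PI_RGT_0.
    split; [lra|].
    unfold ell12.
    apply Rle_trans with ((F ^ 2 - F_2d nu ^ 2) / (2 * F_2d nu ^ 2)).
    { apply Rmax_lub; auto. }
    apply Rle_trans with (ell1 nu F (acos (- (F / E))) mu); [|apply Rmax_l].
    unfold ell1. fold E. rewrite cos_acos by exact Hr. rewrite Hbnd.
    right. field. lra. }
  split.
  { intros theta _. split; [apply B1|]. split; [apply B2|].
    unfold ell3. fold E. rewrite Hmu.
    pose proof (pow2_ge_0 (sin theta)).
    assert (F ^ 2 * (E - 2) / (2 * E) / E = (E - 2) / (2 * E ^ 2) * F ^ 2)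
      by (field; lra). lra. }
  split; [rewrite Hbnd; lra|]. fold E. lra.
Qed.
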